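(* Let $\varphi: S\to R$ be a ring morphism, $W\in S$, $(X,d)$ a finite rank matrix factorisation of $W$ over $R$ with fixed homogeneous $R$-basis $\{\xi_i\}$, and $\mathbf{t}=\{t_1,\ldots,t_n\}$ a quasi-regular sequence in $R$ with odd $R$-linear maps $\lambda_j$ on $X$ satisfying $\lambda_j d + d\lambda_j = t_j\cdot 1_X$. Suppose given $S$-linear maps $\sigma: R/\mathbf{t}R\to K(\mathbf{t})$ (a morphism of complexes) and $h$ of degree $-1$ on $K(\mathbf{t})$ with $\pi\sigma=1$, $\sigma\pi = 1+\delta h + h\delta$, $h^2=0$, $h\sigma = 0$, $\pi h = 0$. Let $\sigma_\infty = \sum_{m\ge0}(hd)^m\sigma: X/\mathbf{t}X\to X\otimes_R K(\mathbf{t})$, $\psi = \varepsilon\circ\sigma_\infty: X/\mathbf{t}X\to X[n]$, and $\vartheta = (-1)^n\lambda_1\cdots\lambda_n: X[n]\to X/\mathbf{t}X$ (the map $X\to X$ followed by the quotient). Then $\psi\circ\vartheta = 1$ in the homotopy category $\mathrm{hf}(S,W)$, hence $e = \vartheta\circ\psi$ is an idempotent endomorphism of $X/\mathbf{t}X$ in $\mathrm{hf}(S,W)$, and \[ e = (-1)^n\lambda_1\cdots\lambda_n\,\varepsilon\,(hd)^n\sigma. \]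
   Context: All rings commutative. Linear factorisation of $W$ over $R$: $\mathbb{Z}/2$-graded $R$-module with odd $R$-linear $d$, $d^2=W\cdot1$; morphisms are even maps commuting with differentials; $\mathrm{hf}(S,W)$ is the homotopy category of linear factorisations of $W$ over $S$ (all $R$-modules being viewed as $S$-modules via $\varphi$). $X[n]$ is the $n$-fold suspension. The Koszul complex $K(\mathbf{t})$ is the exterior algebra on free symbols $\mathrm{d}t_1,\ldots,\mathrm{d}t_n$ of degree $-1$ with differential $\delta$ = contraction with $\sum_it_i(\mathrm{d}t_i)^*$; $\pi: K(\mathbf{t})\to R/\mathbf{t}R$ is the augmentation. $X\otimes_RK(\mathbf{t})$ is formed with the $\mathbb{Z}/2$-folding of $K(\mathbf{t})$ and has differential $d\otimes1+1\otimes\delta$. The maps $h,\sigma$ are extended using the basis by $h(\xi_i\otimes m) = (-1)^{|\xi_i|}\xi_i\otimes h(m)$, $\sigma(\xi_i\otimes p) = \xi_i\otimes\sigma(p)$, and $d$ means $d\otimes 1$. The map $\varepsilon: X\otimes K(\mathbf{t})\to X[n]$ sends $x\otimes\mathrm{d}t_1\cdots\mathrm{d}t_n\mapsto(-1)^{n|x|}x$ and vanishes on the other exterior degrees. $X/\mathbf{t}X = X\otimes_RR/\mathbf{t}R$. *)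

(* Defs.v *)
From HB Require Import structures.
From mathcomp Require Import all_boot all_order all_algebra.
Set Implicit Arguments. Unset Strict Implicit. Unset Printing Implicit Defensive.
Import Order.TTheory GRing.Theory.
Local Open Scope ring_scope.

Section KoszulModel.
Variables (S R : comPzRingType) (phi : {rmorphism S -> R}).
Variables (n k : nat) (t : 'I_n -> R).

(* Free R-module with basis dt_I = dt_{i1} ... dt_{im}, I = {i1 < ... < im};
   dt_I has exterior degree #|I| (cohomological degree -#|I|). *)
Local Notation KT := {ffun {set 'I_n} -> R^o}.

Definition khomog (m : nat) (x : KT) : Prop := forall J : {set 'I_n}, #|J| != m -> x J = 0.

(* delta = contraction with sum_i t_i (dt_i)^* :
   delta(dt_I) = sum_{i in I} (-1)^{#{j in I | j < i}} t_i dt_{I \ i}.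
   Coefficient of dt_J in delta x: *)
Definition kdelta (x : KT) : KT :=
  [ffun J : {set 'I_n} => \sum_(i : 'I_n | i \notin J)
      (-1) ^+ #|[set j in J | (j < i)%N]| * t i * x (i |: J)].

Definition inI (a : R) : Prop := exists c : 'I_n -> R, a = \sum_(i < n) t i * c i.

Definition quasi_regular : Prop :=
  forall (m : nat) (x : KT), (0 < m)%N -> khomog m x -> kdelta x = 0 ->
    exists y : KT, x = kdelta y.

(* S-linearity (all R-modules viewed as S-modules via phi) *)
Definition Slinear (V U : lmodType R) (f : V -> U) : Prop :=
  forall (s : S) (a b : V), f (phi s *: a + b) = phi s *: f a + f b.

(* The homotopy data (sigma, h).  sigma : R/tR -> K(t) is represented by a map
   sigma0 : R -> K(t) vanishing on tR; pi : K(t) -> R/tR is x |-> class of x(set0). *)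
Definition SDR_data (sigma0 : R -> KT) (h : KT -> KT) : Prop :=
      (forall (s : S) (a b : R), sigma0 (phi s * a + b) = phi s *: sigma0 a + sigma0 b) /\
      (forall a, inI a -> sigma0 a = 0) /\
      (* sigma is a morphism of complexes (R/tR sits in degree 0) *)
      (forall a, khomog 0 (sigma0 a)) /\ (forall a, kdelta (sigma0 a) = 0) /\
      Slinear h /\ (forall m (x : KT), khomog m x -> khomog m.+1 (h x)) /\
      (forall a, inI (sigma0 a set0 - a)) /\
        (forall x : KT, sigma0 (x set0) = x + kdelta (h x) + h (kdelta x)) /\
      [/\ forall x : KT, h (h x) = 0, forall a, h (sigma0 a) = 0 & forall x : KT, inI (h x set0)].

(* X = free R-module with homogeneous basis xi_1..xi_k, xi_i of parity p i;
   elements are column vectors, R-linear maps are matrices. *)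
Variable p : 'I_k -> bool.

Definition odd_mx (M : 'M[R]_k) : Prop := forall i j, p i = p j -> M i j = 0.

Definition vhomog (q : 'I_k -> bool) (b : bool) (v : 'cV[R]_k) : Prop :=
  forall i, q i != b -> v i 0 = 0.

(* congruence modulo tX, i.e. equality in X/tX *)
Definition eqmodt (a b : 'cV[R]_k) : Prop := forall i, inI (a i 0 - b i 0).

Definition pshift (i : 'I_k) : bool := p i (+) odd n.

(* ---------- X (x) K(t) = (+)_i xi_i (x) K(t) ---------- *)
Local Notation XK := {ffun 'I_k -> KT}.

Variables (D : 'M[R]_k) (h : KT -> KT) (sigma0 : R -> KT) (lam : 'I_n -> 'M[R]_k).

Definition dX1 (z : XK) : XK := [ffun i => \sum_(j < k) D i j *: z j].
(* h(xi_i (x) m) = (-1)^{|xi_i|} xi_i (x) h m *)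
Definition hX (z : XK) : XK := [ffun i => (-1) ^+ p i *: h (z i)].
(* sigma(xi_i (x) a) = xi_i (x) sigma a, on lifts of elements of X/tX *)
Definition sigX (a : 'cV[R]_k) : XK := [ffun i => sigma0 (a i 0)].
(* epsilon(x (x) dt_1...dt_n) = (-1)^{n|x|} x, zero on other exterior degrees *)
Definition epsX (z : XK) : 'cV[R]_k := \col_i ((-1) ^+ (n * p i) * z i setT).

(* sigma_infty = sum_{m>=0} (hd)^m sigma; terms with m > n vanish since
   (hd)^m sigma lands in exterior degree m. *)
Definition sig_inf (a : 'cV[R]_k) : XK :=
  \sum_(m < n.+1) iter m (fun z => hX (dX1 z)) (sigX a).

Definition psi (a : 'cV[R]_k) : 'cV[R]_k := epsX (sig_inf a).

(* lambda_1 ... lambda_n (composition, lambda_n applied first) *)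
Definition lamprod (v : 'cV[R]_k) : 'cV[R]_k :=
  foldr (fun j w => lam j *m w) v (enum 'I_n).

Definition theta (v : 'cV[R]_k) : 'cV[R]_k := (-1) ^+ n *: lamprod v.

Definition e_idem (a : 'cV[R]_k) : 'cV[R]_k := theta (psi a).

End KoszulModel.

(* Main.v *)
Require Import Defs.
From HB Require Import structures.
From mathcomp Require Import all_boot all_order all_algebra ring.
Set Implicit Arguments. Unset Strict Implicit. Unset Printing Implicit Defensive.
Import Order.TTheory GRing.Theory.
Local Open Scope ring_scope.

Section Pf.
Variables (S R : comPzRingType) (phi : {rmorphism S -> R}) (W : S).
Variables (k : nat) (p : 'I_k -> bool) (D : 'M[R]_k).
Variables (n : nat) (t : 'I_n -> R) (lam : 'I_n -> 'M[R]_k).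
Variables (sigma0 : R -> {ffun {set 'I_n} -> R^o})
  (h : {ffun {set 'I_n} -> R^o} -> {ffun {set 'I_n} -> R^o}).
Local Notation KT := {ffun {set 'I_n} -> R^o}.
Local Notation XK := {ffun 'I_k -> KT}.
Hypothesis Dodd : odd_mx p D.
Hypothesis DD : D *m D = (phi W)%:M.
Hypothesis lamodd : forall j, odd_mx p (lam j).
Hypothesis lamD : forall j, lam j *m D + D *m lam j = (t j)%:M.
Hypothesis sdr : SDR_data phi t sigma0 h.

Local Notation inI := (inI t).

Lemma idem0 (V : zmodType) (x : V) : x = x + x -> x = 0.
Proof. by move/(congr1 (fun y => y - x)); rewrite addrK subrr. Qed.

Lemma inI0 : inI 0.
Proof. by exists (fun=> 0); rewrite big1 // => i _; rewrite mulr0. Qed.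
Lemma inID a b : inI a -> inI b -> inI (a + b).
Proof.
move=> [c ->] [c' ->]; exists (fun i => c i + c' i).
by rewrite -big_split /=; apply: eq_bigr => i _; rewrite mulrDr.
Qed.
Lemma inIM c a : inI a -> inI (c * a).
Proof.
move=> [f ->]; exists (fun i => c * f i); rewrite mulr_sumr.
by apply: eq_bigr => i _; rewrite mulrCA.
Qed.
Lemma inIN a : inI a -> inI (- a).
Proof. by move=> H; rewrite -mulN1r; apply: inIM. Qed.
Lemma inIB a b : inI a -> inI b -> inI (a - b).
Proof. by move=> Ha Hb; apply: inID => //; apply: inIN. Qed.
Lemma inIt j c : inI (t j * c).
Proof.
exists (fun i => if i == j then c else 0).
rewrite (bigD1 j) //= eqxx big1 ?addr0 // => i /negbTE ->; by rewrite mulr0.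
Qed.
Lemma inI_sum (I : finType) (F : I -> R) : (forall i, inI (F i)) -> inI (\sum_i F i).
Proof.
move=> H; elim/big_rec: _ => [|i x _ Hx]; [exact: inI0 | exact: inID].
Qed.

Lemma sig_add a b : sigma0 (a + b) = sigma0 a + sigma0 b.
Proof. case: sdr => [Hs _]; by have := Hs 1 a b; rewrite rmorph1 mul1r scale1r. Qed.
Lemma sig0 : sigma0 0 = 0.
Proof. by apply: idem0; rewrite -sig_add addr0. Qed.
Lemma sigN a : sigma0 (- a) = - sigma0 a.
Proof. by apply/eqP; rewrite -subr_eq0 opprK -sig_add addNr sig0. Qed.
Lemma sigI a : inI a -> sigma0 a = 0.
Proof. by case: sdr => [_ [H _]]; apply: H. Qed.
Lemma sig_eqI a b : inI (a - b) -> sigma0 a = sigma0 b.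
Proof. by move=> H; rewrite -(subrK b a) sig_add sigI // add0r. Qed.
Lemma sig_hom a : khomog 0 (sigma0 a).
Proof. by case: sdr => [_ [_ [H _]]]. Qed.
Lemma sig_delta a : kdelta t (sigma0 a) = 0.
Proof. by case: sdr => [_ [_ [_ [H _]]]]. Qed.
Lemma h_lin s a b : h (phi s *: a + b) = phi s *: h a + h b.
Proof. by case: sdr => [_ [_ [_ [_ [H _]]]]]; exact: H. Qed.
Lemma h_add a b : h (a + b) = h a + h b.
Proof. by have := h_lin 1 a b; rewrite rmorph1 !scale1r. Qed.
Lemma h0 : h 0 = 0.
Proof. by apply: idem0; rewrite -h_add addr0. Qed.
Lemma hN a : h (- a) = - h a.
Proof. by apply/eqP; rewrite -subr_eq0 opprK -h_add addNr h0. Qed.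
Lemma hZ s a : h (phi s *: a) = phi s *: h a.
Proof. by have := h_lin s a 0; rewrite addr0 h0 addr0. Qed.
Lemma h_hom m x : khomog m x -> khomog m.+1 (h x).
Proof. by case: sdr => [_ [_ [_ [_ [_ [H _]]]]]]; apply: H. Qed.
Lemma pisig a : inI (sigma0 a set0 - a).
Proof. by case: sdr => [_ [_ [_ [_ [_ [_ [H _]]]]]]]. Qed.
Lemma sigpi (x : KT) : sigma0 (x set0) = x + kdelta t (h x) + h (kdelta t x).
Proof. by case: sdr => [_ [_ [_ [_ [_ [_ [_ [H _]]]]]]]]. Qed.
Lemma hh (x : KT) : h (h x) = 0.
Proof. by case: sdr => [_ [_ [_ [_ [_ [_ [_ [_ [H _ _]]]]]]]]]. Qed.
Lemma hsig a : h (sigma0 a) = 0.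
Proof. by case: sdr => [_ [_ [_ [_ [_ [_ [_ [_ [_ H _]]]]]]]]]. Qed.
Lemma pih (x : KT) : inI (h x set0).
Proof. by case: sdr => [_ [_ [_ [_ [_ [_ [_ [_ [_ _ H]]]]]]]]]. Qed.
Lemma h_sum (I : finType) (F : I -> KT) : h (\sum_i F i) = \sum_i h (F i).
Proof. by elim/big_rec2: _ => [|i x y _ <-]; rewrite ?h0 // h_add. Qed.
Lemma h_sign (b : bool) x : h ((-1) ^+ b *: x) = (-1) ^+ b *: h x.
Proof. by case: b; rewrite ?expr1 ?expr0 ?scaleN1r ?scale1r ?hN. Qed.

Lemma kdeltaD x y : kdelta t (x + y) = kdelta t x + kdelta t y.
Proof.
apply/ffunP=> J; rewrite !ffunE -big_split /=; apply: eq_bigr => i _.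
by rewrite ffunE mulrDr.
Qed.
Lemma kdeltaZ c x : kdelta t (c *: x) = c *: kdelta t x.
Proof.
apply/ffunP=> J; rewrite !ffunE scaler_sumr; apply: eq_bigr => i _.
by rewrite ffunE /GRing.scale /= mulrCA.
Qed.
Lemma kdelta0 : kdelta t 0 = 0.
Proof. by apply/ffunP=> J; rewrite !ffunE big1 // => i _; rewrite ffunE mulr0. Qed.
Lemma kdeltaN x : kdelta t (- x) = - kdelta t x.
Proof. by rewrite -scaleN1r kdeltaZ scaleN1r. Qed.
Lemma kdelta_sum (I : finType) (F : I -> KT) : kdelta t (\sum_i F i) = \sum_i kdelta t (F i).
Proof. by elim/big_rec2: _ => [|i x y _ <-]; rewrite ?kdelta0 // kdeltaD. Qed.


Lemma sgn_flip (b c : bool) : b != c -> (-1) ^+ b = - (-1) ^+ c :> R.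
Proof. by case: b; case: c => //= _; rewrite ?expr1 ?expr0 ?opprK. Qed.

Lemma oddsgn (M : 'M[R]_k) (V : lmodType R) i j (y : V) : odd_mx p M ->
  (-1) ^+ p i *: (M i j *: y) = - (M i j *: ((-1) ^+ p j *: y)).
Proof.
move=> Mo; case E: (p i == p j).
  by rewrite Mo ?(eqP E) // !scale0r scaler0 oppr0.
move/negbT: E => E; rewrite !scalerA (sgn_flip E) mulNr scaleNr mulrC //.
Qed.

Lemma sum_scalar (V : lmodType R) (a : R) (F : 'I_k -> V) i :
  \sum_l (a%:M : 'M[R]_k) i l *: F l = a *: F i.
Proof.
rewrite (bigD1 i) //= big1 ?addr0; first by rewrite mxE eqxx mulr1n.
by move=> l /negbTE Hl; rewrite mxE eq_sym Hl mulr0n scale0r.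
Qed.

Definition d1 (z : XK) : XK := dX1 D z.
Definition Hx (z : XK) : XK := hX p h z.
Definition Dl (z : XK) : XK := [ffun i => (-1) ^+ p i *: kdelta t (z i)].
Definition pvec (z : XK) : 'cV[R]_k := \col_i (z i set0).
Definition Pz (z : XK) : XK := sigX sigma0 (pvec z).
Definition T (z : XK) : XK := Hx (d1 z).

Definition addf (V U : zmodType) (f : V -> U) := forall a b, f (a + b) = f a + f b.
Lemma addf0 (V U : zmodType) (f : V -> U) : addf f -> f 0 = 0.
Proof. by move=> H; apply: idem0; rewrite -H addr0. Qed.
Lemma addfN (V U : zmodType) (f : V -> U) : addf f -> forall a, f (- a) = - f a.
Proof. by move=> H a; apply/eqP; rewrite -subr_eq0 opprK -H addNr (addf0 H). Qed.
Lemma addfB (V U : zmodType) (f : V -> U) : addf f -> forall a b, f (a - b) = f a - f b.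
Proof. by move=> H a b; rewrite H (addfN H). Qed.
Lemma addf_sum (V U : zmodType) (f : V -> U) (I : finType) (F : I -> V) :
  addf f -> f (\sum_i F i) = \sum_i f (F i).
Proof. by move=> H; elim/big_rec2: _ => [|i x y _ <-]; rewrite ?(addf0 H) // H. Qed.

Lemma d1_add : addf d1.
Proof.
move=> a b; apply/ffunP=> i; rewrite !ffunE -big_split /=; apply: eq_bigr => j _.
by rewrite ffunE scalerDr.
Qed.
Lemma d1Z c z : d1 (c *: z) = c *: d1 z.
Proof.
apply/ffunP=> i; rewrite !ffunE scaler_sumr; apply: eq_bigr => j _.
by rewrite ffunE !scalerA mulrC.
Qed.
Lemma Hx_add : addf Hx.
Proof. by move=> a b; apply/ffunP=> i; rewrite !ffunE h_add scalerDr. Qed.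
Lemma HxZ s z : Hx (phi s *: z) = phi s *: Hx z.
Proof. by apply/ffunP=> i; rewrite !ffunE hZ !scalerA mulrC. Qed.
Lemma Dl_add : addf Dl.
Proof. by move=> a b; apply/ffunP=> i; rewrite !ffunE kdeltaD scalerDr. Qed.
Lemma T_add : addf T.
Proof. by move=> a b; rewrite /T d1_add Hx_add. Qed.
Lemma iterT_add m : addf (iter m T).
Proof. by elim: m => [|m IH] a b //=; rewrite IH T_add. Qed.

Lemma d1d1 z : d1 (d1 z) = phi W *: z.
Proof.
apply/ffunP=> i; rewrite !ffunE.
transitivity (\sum_l (D *m D) i l *: z l); last by rewrite DD sum_scalar.
under eq_bigr => j _ do rewrite ffunE scaler_sumr.
rewrite exchange_big /=; apply: eq_bigr => l _; rewrite mxE scaler_suml.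
by apply: eq_bigr => j _; rewrite scalerA.
Qed.

Lemma Dl_d1 z : Dl (d1 z) = - d1 (Dl z).
Proof.
apply/ffunP=> i; rewrite !ffunE kdelta_sum scaler_sumr -sumrN; apply: eq_bigr => j _.
by rewrite kdeltaZ oddsgn // ffunE.
Qed.

Lemma Pz_eq z : Pz z = z + Dl (Hx z) + Hx (Dl z).
Proof.
apply/ffunP=> i; rewrite !ffunE mxE sigpi kdeltaZ h_sign !scalerA -expr2 sqrr_sign.
by rewrite !scale1r.
Qed.
Lemma HxHx z : Hx (Hx z) = 0.
Proof. by apply/ffunP=> i; rewrite !ffunE h_sign hh !scaler0. Qed.
Lemma Hx_sig a : Hx (sigX sigma0 a) = 0.
Proof. by apply/ffunP=> i; rewrite !ffunE hsig scaler0. Qed.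
Lemma Dl_sig a : Dl (sigX sigma0 a) = 0.
Proof. by apply/ffunP=> i; rewrite !ffunE sig_delta scaler0. Qed.
Lemma sigX_eq (a b : 'cV[R]_k) : (forall i, inI (a i 0 - b i 0)) -> sigX sigma0 a = sigX sigma0 b.
Proof. by move=> H; apply/ffunP=> i; rewrite !ffunE; apply: sig_eqI. Qed.
Lemma sigX0 (a : 'cV[R]_k) : (forall i, inI (a i 0)) -> sigX sigma0 a = 0.
Proof. by move=> H; apply/ffunP=> i; rewrite !ffunE sigI. Qed.
Lemma Pz_Hx z : Pz (Hx z) = 0.
Proof.
apply: sigX0 => i; rewrite !mxE ffunE; case: (p i); rewrite ?expr1 ?expr0.
  by rewrite scaleN1r ffunE; apply: inIN; apply: pih.
by rewrite scale1r; apply: pih.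
Qed.
Lemma Pz_d1Hx z : Pz (d1 (Hx z)) = 0.
Proof.
apply: sigX0 => i; rewrite !mxE !ffunE sum_ffunE; apply: inI_sum => j.
rewrite !ffunE; case: (p j); rewrite ?expr1 ?expr0 ?scaleN1r ?scale1r ?ffunE;
  apply: inIM; rewrite ?ffunE; [apply: inIN|]; apply: pih.
Qed.

Lemma d1N z : d1 (- z) = - d1 z. Proof. exact: (addfN d1_add). Qed.
Lemma HxN z : Hx (- z) = - Hx z. Proof. exact: (addfN Hx_add). Qed.
Lemma d10 : d1 0 = 0. Proof. exact: (addf0 d1_add). Qed.
Lemma Hx0 : Hx 0 = 0. Proof. exact: (addf0 Hx_add). Qed.
Lemma Dl_Hx y : Dl (Hx y) = Pz y - y - Hx (Dl y).
Proof. by apply/eqP; rewrite eq_sym !subr_eq Pz_eq -addrA addrC. Qed.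

Lemma pvec_d1 z : pvec (d1 z) = D *m pvec z.
Proof.
apply/matrixP=> i j; rewrite !mxE ffunE sum_ffunE (ord1 j); apply: eq_bigr => l _.
by rewrite ffunE mxE.
Qed.

Lemma Ivec_mul (M : 'M[R]_k) (v : 'cV[R]_k) : (forall i, inI (v i 0)) -> forall i, inI ((M *m v) i 0).
Proof. by move=> H i; rewrite mxE; apply: inI_sum => j; apply: inIM. Qed.

Lemma Pz_d1_sig a : Pz (d1 (sigX sigma0 a)) = sigX sigma0 (D *m a).
Proof.
rewrite /Pz pvec_d1; apply: sigX_eq => i.
have -> : (D *m pvec (sigX sigma0 a)) i 0 - (D *m a) i 0 = (D *m (pvec (sigX sigma0 a) - a)) i 0.
  by rewrite mulmxBr !mxE.
by apply: Ivec_mul => j; rewrite !mxE ffunE; apply: pisig.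
Qed.

Lemma Hx_iter m a : Hx (iter m T (sigX sigma0 a)) = 0.
Proof. by case: m => [|m] /=; rewrite ?Hx_sig // /T HxHx. Qed.

Lemma u_eq a m : iter m T (sigX sigma0 (D *m a)) =
  Dl (iter m.+1 T (sigX sigma0 a)) + d1 (iter m T (sigX sigma0 a)).
Proof.
elim: m => [|m IH].
  rewrite /= /T Dl_Hx Dl_d1 Dl_sig d10 oppr0 Hx0 subr0 subrK.
  by rewrite Pz_d1_sig.
rewrite [LHS]iterS IH !iterS; set s := iter m T _.
have E1 : Dl (T (T s)) = - d1 (T s) + Hx (d1 (Dl (T s))).
  by rewrite {1}/T Dl_Hx Dl_d1 HxN opprK /T Pz_d1Hx sub0r.
rewrite E1 T_add.
have -> : T (d1 s) = 0 by rewrite /T d1d1 HxZ Hx_iter scaler0.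
by rewrite addr0 addrAC addNr add0r.
Qed.

Lemma eps_add : addf (epsX p : XK -> 'cV[R]_k).
Proof. by move=> a b; apply/matrixP=> i j; rewrite !mxE !ffunE mulrDr. Qed.
Lemma epsZ c (z : XK) : epsX p (c *: z) = c *: epsX p z.
Proof. by apply/matrixP=> i j; rewrite !mxE !ffunE /GRing.scale /= mulrCA. Qed.
Lemma eps_Dl z : epsX p (Dl z) = 0.
Proof.
apply/matrixP=> i j; rewrite !mxE !ffunE big_pred0 ?scaler0 ?mulr0 // => l.
by rewrite in_setT.
Qed.
Lemma sign_sq m : (-1) ^+ m * (-1) ^+ m = 1 :> R.
Proof. by rewrite -exprD addnn -mul2n exprM sqrrN expr1n expr1n. Qed.

Lemma eps_d1 z : epsX p (d1 z) = (-1) ^+ n *: (D *m epsX p z).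
Proof.
apply/matrixP=> i j; rewrite !mxE ffunE sum_ffunE mulr_sumr mulr_sumr.
apply: eq_bigr => l _; rewrite !ffunE mxE /GRing.scale /=.
case E: (p i == p l); first by rewrite Dodd ?(eqP E) // !(mul0r, mulr0).
move/negbT: E; case: (p i); case: (p l) => //= _; rewrite ?muln0 ?muln1 ?expr0 ?mul1r.
  by [].
by rewrite (mulrCA (D i l) ((-1) ^+ n)) !mulrA sign_sq mul1r.
Qed.

Lemma psiD a : psi p D h sigma0 (D *m a) = ((-1) ^+ n *: D) *m psi p D h sigma0 a.
Proof.
rewrite /psi /sig_inf -/T -/T -scalemxAl (addf_sum _ eps_add) (addf_sum _ eps_add).
rewrite mulmx_sumr scaler_sumr; apply: eq_bigr => m _.
by rewrite u_eq eps_add eps_Dl add0r eps_d1.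
Qed.

Lemma ffD (aT : finType) (V : zmodType) (f g : {ffun aT -> V}) x : (f + g) x = f x + g x.
Proof. by rewrite ffunE. Qed.
Lemma ffN (aT : finType) (V : zmodType) (f : {ffun aT -> V}) x : (- f) x = - f x.
Proof. by rewrite ffunE. Qed.
Lemma ff0 (aT : finType) (V : zmodType) x : (0 : {ffun aT -> V}) x = 0.
Proof. by rewrite ffunE. Qed.

Ltac zsolve := apply/ffunP => ?; apply/ffunP => ?; rewrite ?(ffD, ffN, ff0); ring.

Lemma HxB a b : Hx (a - b) = Hx a - Hx b. Proof. exact: (addfB Hx_add). Qed.
Lemma d1B a b : d1 (a - b) = d1 a - d1 b. Proof. exact: (addfB d1_add). Qed.
Lemma TB a b : T (a - b) = T a - T b. Proof. exact: (addfB T_add). Qed.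

Lemma Hx_iterH m z : Hx (iter m T (Hx z)) = 0.
Proof. by case: m => [|m] /=; rewrite ?HxHx // /T HxHx. Qed.

Lemma a_eq m z : Dl (iter m.+1 T (Hx z)) + d1 (iter m T (Hx z)) =
  iter m.+1 T (Pz z) - iter m.+1 T z - iter m.+1 T (Hx (Dl z)).
Proof.
elim: m => [|m IH].
  rewrite /= {1}/T Dl_Hx Pz_d1Hx Dl_d1 HxN opprK Dl_Hx !d1B !HxB -!/(T _).
  zsolve.
rewrite [iter m.+2 T (Hx z)]iterS.
set w := iter m T (Hx z).
have Ey : iter m.+1 T (Hx z) = Hx (d1 w) by [].
have EDy : Dl (iter m.+1 T (Hx z)) = iter m.+1 T (Pz z) - iter m.+1 T z -
   iter m.+1 T (Hx (Dl z)) - d1 w by rewrite -IH addrK.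
rewrite {1}/T Dl_Hx Ey Pz_d1Hx -Ey Dl_d1 HxN opprK EDy d1B HxB d1d1 HxZ.
rewrite Hx_iterH scaler0 subr0 -/(T _) !TB -!iterS.
zsolve.
Qed.

Definition Dt z := d1 z + Dl z.
Definition hinf N z := \sum_(m < N.+1) iter m T (Hx z).
Definition sN N z := \sum_(m < N.+1) iter m T (Pz z).

Lemma iterS' m (x : XK) : iter m.+1 T x = T (iter m T x). Proof. by []. Qed.

Lemma pert N z : sN N z + d1 (iter N T (Hx z)) + iter N.+1 T z =
  z + Dt (hinf N z) + hinf N (Dt z).
Proof.
elim: N => [|N IH].
  rewrite /sN /hinf !big_ord1 /= /Dt Hx_add Pz_eq /T; zsolve.
have Es w : sN N.+1 w = sN N w + iter N.+1 T (Pz w) by rewrite /sN big_ord_recr.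
have Eh w : hinf N.+1 w = hinf N w + iter N.+1 T (Hx w) by rewrite /hinf big_ord_recr.
rewrite Es !Eh.
rewrite /Dt in IH *.
rewrite d1_add Dl_add Hx_add iterT_add -/(T z) -iterSr.
rewrite [iter N.+2 T z]iterS'.
have EX : iter N.+1 T (Pz z) = Dl (iter N.+1 T (Hx z)) + d1 (iter N T (Hx z)) +
   iter N.+1 T z + iter N.+1 T (Hx (Dl z)) by rewrite a_eq; zsolve.
have EH : d1 (hinf N z) = sN N z + d1 (iter N T (Hx z)) + iter N.+1 T z - z
   - Dl (hinf N z) - hinf N (d1 z + Dl z) by rewrite IH; zsolve.
rewrite EX EH; zsolve.
Qed.

Definition restr (l : nat) (x : KT) : KT := [ffun J : {set 'I_n} => if #|J| == l then x J else 0].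

Lemma cardJ (J : {set 'I_n}) : (#|J| < n.+1)%N.
Proof. by rewrite ltnS -[X in (_ <= X)%N]card_ord max_card. Qed.

Lemma decomp (x : KT) : x = \sum_(l < n.+1) restr l x.
Proof.
apply/ffunP=> J; rewrite sum_ffunE (bigD1 (Ordinal (cardJ J))) //= ffunE eqxx big1 ?addr0 //.
move=> l /eqP Hl; rewrite ffunE; case: eqP => // E; exfalso; apply: Hl.
by apply: val_inj => /=.
Qed.

Lemma h_supp (Q : pred nat) (x : KT) : (forall J : {set 'I_n}, ~~ Q #|J| -> x J = 0) ->
  forall J : {set 'I_n}, (forall l, Q l -> #|J| != l.+1) -> h x J = 0.
Proof.
move=> Hx J HJ; rewrite (decomp x) h_sum sum_ffunE big1 // => l _.
case: (boolP (Q l)) => Ql.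
  apply: (h_hom (m := l)); last exact: HJ.
  by move=> K HK; rewrite ffunE (negbTE HK).
have -> : restr l x = 0.
  by apply/ffunP=> K; rewrite !ffunE; case: eqP => // E; rewrite Hx // E.
by rewrite h0 ffunE.
Qed.

Definition degge m (z : XK) := forall i (J : {set 'I_n}), (#|J| < m)%N -> z i J = 0.
Lemma degge_Hx m z : degge m z -> degge m.+1 (Hx z).
Proof.
move=> Hz i J HJ.
rewrite !ffunE; have -> : h (z i) J = 0.
  apply: (h_supp (Q := fun l => (m <= l)%N)).
    by move=> K; rewrite -ltnNge => HK; apply: Hz.
  by move=> l Hl; apply/eqP => E; move: HJ; rewrite E ltnS ltnNge Hl.
by rewrite scaler0.
Qed.
Lemma degge_d1 m z : degge m z -> degge m (d1 z).
Proof.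
move=> Hz i J HJ; rewrite ffunE sum_ffunE big1 // => l _.
by rewrite ffunE Hz // /GRing.scale /= mulr0.
Qed.
Lemma degge_T m z : degge m z -> degge m.+1 (T z).
Proof. by move=> H; apply: degge_Hx; apply: degge_d1. Qed.
Lemma degge_iterT j m z : degge m z -> degge (j + m) (iter j T z).
Proof. by elim: j => [|j IH] //= H; apply: degge_T; apply: IH. Qed.
Lemma degge0 z : degge 0 z. Proof. by []. Qed.
Lemma eps_degge z : degge n.+1 z -> epsX p z = 0.
Proof.
move=> H; apply/matrixP=> i j; rewrite !mxE H ?mulr0 //.
by rewrite cardsT card_ord.
Qed.

Definition hom m (z : XK) := forall i (J : {set 'I_n}), #|J| != m -> z i J = 0.
Lemma hom_Pz a : hom 0 (sigX sigma0 a).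
Proof. by move=> i J HJ; rewrite ffunE; apply: sig_hom. Qed.
Lemma hom_T m z : hom m z -> hom m.+1 (T z).
Proof.
move=> Hz i J HJ; rewrite !ffunE.
have -> : h (\sum_(j < k) D i j *: z j) J = 0.
  apply: (h_hom (m := m)) => // K HK; rewrite sum_ffunE big1 // => l _.
  by rewrite ffunE Hz // /GRing.scale /= mulr0.
by rewrite scaler0.
Qed.
Lemma hom_iter m a : hom m (iter m T (sigX sigma0 a)).
Proof. by elim: m => [|m IH] /=; [apply: hom_Pz | apply: hom_T]. Qed.
Lemma eps_hom m z : m != n -> hom m z -> epsX p z = 0.
Proof.
move=> Hm H; apply/matrixP=> i j; rewrite !mxE H ?mulr0 //.
by rewrite cardsT card_ord eq_sym.
Qed.

Definition sgn (J : {set 'I_n}) (i : 'I_n) : R := (-1) ^+ #|[set j in J | (j < i)%N]|.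
Definition ewedge (j : 'I_n) (x : KT) : KT :=
  [ffun J : {set 'I_n} => if j \in J then sgn J j * x (J :\ j) else 0].

Definition cs (b : bool) : R := if b then -1 else 1.
Lemma cs2 b : cs b * cs b = 1. Proof. by case: b; rewrite /= ?mulrNN mulr1. Qed.
Lemma sgn2 J i : sgn J i * sgn J i = 1. Proof. exact: sign_sq. Qed.

Lemma sgnU (J : {set 'I_n}) i j : i \notin J -> sgn (i |: J) j = cs (i < j)%N * sgn J j.
Proof.
move=> iJ; rewrite /sgn.
have -> : [set l in i |: J | (l < j)%N] =
   if (i < j)%N then i |: [set l in J | (l < j)%N] else [set l in J | (l < j)%N].
  apply/setP => l; rewrite !(in_setU1, inE) /=; case: ifP => ij; rewrite !(in_setU1, inE) /=.
    by case: eqP => // ->; rewrite ij.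
  by case: eqP => //= ->; rewrite ij andbF.
case: ifP => ij /=; last by rewrite mul1r.
rewrite cardsU1 inE (negbTE iJ) /= add1n exprS.
by [].
Qed.

Lemma sgnD (J : {set 'I_n}) i j : j \in J -> sgn (J :\ j) i = cs (j < i)%N * sgn J i.
Proof.
move=> jJ; have E : J = j |: (J :\ j) by rewrite setD1K.
rewrite {2}E sgnU ?setD11 // mulrA cs2 mul1r //.
Qed.

Lemma kdeltaE (x : KT) J : kdelta t x J = \sum_(i | i \notin J) sgn J i * t i * x (i |: J).
Proof. by rewrite ffunE. Qed.
Lemma ewedgeE j (x : KT) J : ewedge j x J = if j \in J then sgn J j * x (J :\ j) else 0.
Proof. by rewrite ffunE. Qed.

Lemma cs_flip (i j : 'I_n) : i != j -> cs (i < j)%N = - cs (j < i)%N.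
Proof.
move=> ij; rewrite /cs; case: ltngtP => //=; rewrite ?opprK //.
by move/val_inj/eqP; rewrite (negbTE ij).
Qed.

Lemma kdelta_wedge j (x : KT) : kdelta t (ewedge j x) + ewedge j (kdelta t x) = t j *: x.
Proof.
apply/ffunP => J; rewrite ffunE [(t j *: x) J]ffunE kdeltaE ewedgeE /GRing.scale /=.
case: (boolP (j \in J)) => jJ.
  rewrite kdeltaE [X in sgn J j * X](bigD1 j) ?setD11 //= setD1K // sgnD // ltnn /cs mul1r.
  rewrite mulrDr mulrA mulrA sgn2 mul1r addrCA.
  rewrite -[X in _ = X]addr0; congr (_ + _).
  have -> : \sum_(i | (i \notin J :\ j) && (i != j)) sgn (J :\ j) i * t i * x (i |: (J :\ j)) =
     \sum_(i | i \notin J) sgn (J :\ j) i * t i * x (i |: (J :\ j)).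
    apply: eq_bigl => i; rewrite in_setD1; case: eqP => [->|]; first by rewrite jJ.
    by rewrite andbT.
  rewrite mulr_sumr -big_split /= big1 // => i iJ.
  have ij : i != j by apply: contraNneq iJ => ->.
  rewrite ewedgeE in_setU1 jJ orbT sgnU // sgnD //.
  have -> : (i |: J) :\ j = i |: (J :\ j).
    apply/setP => l; rewrite !(in_setD1, in_setU1); case: eqP => // ->.
    by rewrite (eq_sym j i) (negbTE ij).
  rewrite (cs_flip ij) /=. ring.
rewrite (bigD1 j) //= ewedgeE setU11 sgnU // ltnn /cs mul1r setU1K //.
rewrite big1 ?addr0.
  by transitivity (sgn J j * sgn J j * (t j * x J)); [ring | rewrite sgn2 mul1r].
move=> i /andP [iJ ij]; rewrite ewedgeE in_setU1 eq_sym (negbTE ij) (negbTE jJ) /=.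
by rewrite mulr0.
Qed.

Lemma ewedge_add j : addf (ewedge j).
Proof. move=> a b; apply/ffunP=> J; rewrite !ffunE; case: ifP => _; [by rewrite mulrDr | by rewrite addr0]. Qed.
Lemma ewedgeZ j c (x : KT) : ewedge j (c *: x) = c *: ewedge j x.
Proof.
apply/ffunP=> J; rewrite !ffunE /GRing.scale /=; case: ifP; rewrite ?mulr0 //.
by rewrite mulrCA.
Qed.

Definition mxop (M : 'M[R]_k) (z : XK) : XK := [ffun i => \sum_l M i l *: z l].
Lemma d1E z : d1 z = mxop D z. Proof. by []. Qed.
Lemma mxop_add M : addf (mxop M).
Proof.
move=> a b; apply/ffunP=> i; rewrite !ffunE -big_split /=; apply: eq_bigr => j _.
by rewrite ffunE scalerDr.
Qed.
Lemma mxopZ M c z : mxop M (c *: z) = c *: mxop M z.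
Proof.
apply/ffunP=> i; rewrite !ffunE scaler_sumr; apply: eq_bigr => j _.
by rewrite ffunE !scalerA mulrC.
Qed.
Lemma mxopM M N z : mxop M (mxop N z) = mxop (M *m N) z.
Proof.
apply/ffunP=> i; rewrite !ffunE.
under eq_bigr => j _ do rewrite ffunE scaler_sumr.
rewrite exchange_big /=; apply: eq_bigr => l _; rewrite mxE scaler_suml.
by apply: eq_bigr => j _; rewrite scalerA.
Qed.
Lemma mxopD M N z : mxop (M + N) z = mxop M z + mxop N z.
Proof.
apply/ffunP=> i; rewrite !ffunE -big_split /=; apply: eq_bigr => j _.
by rewrite mxE scalerDl.
Qed.
Lemma mxop_scalar a z : mxop (a%:M) z = a *: z.
Proof. by apply/ffunP=> i; rewrite !ffunE sum_scalar. Qed.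

Lemma Dl_mxop M z : odd_mx p M -> Dl (mxop M z) = - mxop M (Dl z).
Proof.
move=> Mo; apply/ffunP=> i; rewrite !ffunE kdelta_sum scaler_sumr -sumrN; apply: eq_bigr => j _.
by rewrite kdeltaZ oddsgn // ffunE.
Qed.

Definition Ew j (z : XK) : XK := [ffun i => (-1) ^+ p i *: ewedge j (z i)].
Definition Lm j (z : XK) : XK := mxop (lam j) z.
Definition Aop j (z : XK) : XK := Ew j z - Lm j z.

Lemma ewedge_sum j (I : finType) (F : I -> KT) : ewedge j (\sum_i F i) = \sum_i ewedge j (F i).
Proof. exact: addf_sum (ewedge_add j). Qed.

Lemma Ew_mxop j M z : odd_mx p M -> Ew j (mxop M z) = - mxop M (Ew j z).
Proof.
move=> Mo; apply/ffunP=> i; rewrite !ffunE ewedge_sum scaler_sumr -sumrN; apply: eq_bigr => l _.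
by rewrite ewedgeZ oddsgn // ffunE.
Qed.
Lemma Ew_add j : addf (Ew j).
Proof. by move=> a b; apply/ffunP=> i; rewrite !ffunE ewedge_add scalerDr. Qed.
Lemma EwZ j c z : Ew j (c *: z) = c *: Ew j z.
Proof. by apply/ffunP=> i; rewrite !ffunE ewedgeZ !scalerA mulrC. Qed.

Lemma Dl_Ew j z : Dl (Ew j z) + Ew j (Dl z) = t j *: z.
Proof.
apply/ffunP=> i; rewrite !ffunE kdeltaZ ewedgeZ !scalerA -expr2 sqrr_sign !scale1r.
exact: kdelta_wedge.
Qed.

Lemma Aop_add j : addf (Aop j).
Proof. move=> a b; rewrite /Aop Ew_add /Lm mxop_add; zsolve. Qed.
Lemma AopZ j c z : Aop j (c *: z) = c *: Aop j z.
Proof. by rewrite /Aop EwZ /Lm mxopZ scalerBr. Qed.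
Lemma AopN j z : Aop j (- z) = - Aop j z.
Proof. by rewrite (addfN (@Aop_add j)). Qed.
Lemma Dt_add : addf Dt.
Proof. move=> a b; rewrite /Dt d1_add Dl_add; zsolve. Qed.

Lemma Dt_Aop j z : Dt (Aop j z) = - Aop j (Dt z).
Proof.
have E1 : d1 (Lm j z) + Lm j (d1 z) = t j *: z.
  by rewrite /Lm !d1E !mxopM -mxopD addrC lamD mxop_scalar.
have E2 := Dl_Ew j z.
have E3 : Dl (Lm j z) = - Lm j (Dl z) by rewrite /Lm Dl_mxop.
have E4 : d1 (Ew j z) = - Ew j (d1 z) by rewrite d1E Ew_mxop // opprK.
have Lm_add : addf (Lm j) by apply: mxop_add.
rewrite /Dt /Aop d1B (addfB Dl_add) Ew_add Lm_add E4 E3.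
have E1' : Lm j (d1 z) = t j *: z - d1 (Lm j z) by rewrite -E1 [d1 _ + _]addrC addrK.
have E2' : Ew j (Dl z) = t j *: z - Dl (Ew j z) by rewrite -E2 [Dl _ + _]addrC addrK.
rewrite E1' E2'; zsolve.
Qed.

Definition emb (v : 'cV[R]_k) : XK :=
  [ffun i => [ffun J : {set 'I_n} => if J == set0 then v i 0 else 0]].
Definition kapf (s : seq 'I_n) v := foldr Aop (emb v) s.
Definition kap v := kapf (enum 'I_n) v.

Lemma setU1_neq0 (i : 'I_n) J : (i |: J == set0) = false.
Proof. by apply/negP => /eqP E; have := setU11 i J; rewrite E inE. Qed.

Lemma Dt_emb v : Dt (emb v) = emb (D *m v).
Proof.
apply/ffunP=> i; apply/ffunP=> J; rewrite /Dt ffD ffD.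
have -> : Dl (emb v) i J = 0.
  rewrite ffunE ffunE /GRing.scale /= kdeltaE big1 ?mulr0 // => l _.
  by rewrite ffunE ffunE setU1_neq0 mulr0.
rewrite addr0 d1E !ffunE sum_ffunE mxE; case: eqP => [->|HJ].
  by apply: eq_bigr => l _; rewrite !ffunE eqxx.
by apply: big1 => l _; rewrite !ffunE; case: eqP => // _; rewrite /GRing.scale /= mulr0.
Qed.

Lemma emb_add : addf emb.
Proof. by move=> a b; apply/ffunP=> i; apply/ffunP=> J; rewrite !ffunE; case: eqP; rewrite ?mxE ?addr0. Qed.
Lemma embZ c v : emb (c *: v) = c *: emb v.
Proof.
apply/ffunP=> i; apply/ffunP=> J; rewrite !ffunE /GRing.scale /=; case: eqP; rewrite ?mxE ?mulr0 //.
Qed.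

Lemma kapf_add s : addf (kapf s).
Proof. by elim: s => [|j s IH] a b /=; rewrite ?emb_add // /kapf /= -!/(kapf s _) IH Aop_add. Qed.
Lemma kapfZ s c v : kapf s (c *: v) = c *: kapf s v.
Proof. by elim: s => [|j s IH] /=; rewrite ?embZ // /kapf /= -!/(kapf s _) IH AopZ. Qed.

Lemma Dt_kapf s v : Dt (kapf s v) = (-1) ^+ size s *: kapf s (D *m v).
Proof.
elim: s => [|j s IH]; first by rewrite /= scale1r Dt_emb.
rewrite /kapf /= -!/(kapf s _) Dt_Aop IH AopZ exprS -scalerA scaleN1r.
by [].
Qed.

Lemma pvec_Aop j z : pvec (Aop j z) = - (lam j *m pvec z).
Proof.
apply/matrixP=> i c; rewrite (ord1 c) !mxE /Aop ffunE ffunE ffunE ffunE.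
rewrite ffunE in_set0 /GRing.scale /= mulr0 add0r ffunE ffunE /Lm ffunE sum_ffunE.
by congr (- _); apply: eq_bigr => l _; rewrite ffunE mxE.
Qed.
Lemma pvec_emb v : pvec (emb v) = v.
Proof. by apply/matrixP=> i c; rewrite (ord1 c) !mxE !ffunE eqxx. Qed.

Lemma pvec_kapf s v : pvec (kapf s v) = (-1) ^+ size s *: foldr (fun j w => lam j *m w) v s.
Proof.
elim: s => [|j s IH]; first by rewrite /= scale1r pvec_emb.
rewrite /kapf /= -!/(kapf s _) pvec_Aop IH -scalemxAr exprS -scalerA scaleN1r.
by [].
Qed.
Lemma pvec_kap v : pvec (kap v) = theta lam v.
Proof. by rewrite /kap pvec_kapf size_enum_ord. Qed.

Definition ltord : rel 'I_n := fun a b => (val a < val b)%N.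
Lemma ltord_tr : transitive ltord.
Proof. by move=> b a c; rewrite /ltord; apply: ltn_trans. Qed.

Lemma AopE j z i J : Aop j z i J =
  (-1) ^+ p i * (if j \in J then sgn J j * z i (J :\ j) else 0) - \sum_l lam j i l * z l J.
Proof.
rewrite /Aop ffD ffN ffD ffN ffunE ffunE ewedgeE /Lm ffunE sum_ffunE /GRing.scale /=.
by congr (_ - _); apply: eq_bigr => l _; rewrite ffunE.
Qed.

Lemma kapf_top s v : sorted ltord s ->
  (forall i (J : {set 'I_n}), ~~ (J \subset [set x in s]) -> kapf s v i J = 0) /\
  (forall i, kapf s v i [set x in s] = (-1) ^+ (size s * p i) * v i 0).
Proof.
elim: s => [|j s IH] Hs.
  split=> [i J HJ|i]; rewrite /kapf /= !ffunE.
    case: eqP => // E; exfalso; move: HJ; rewrite E sub0set //.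
  have -> : [set x in [::]] = set0 :> {set 'I_n} by apply/setP => x; rewrite !inE.
  by rewrite eqxx mul1r.
have Hs' : sorted ltord s by apply: path_sorted Hs.
have Hall : all (ltord j) s by apply: order_path_min ltord_tr Hs.
have jns : j \notin s.
  by apply/negP => js; move/allP: Hall => /(_ j js); rewrite /ltord ltnn.
case: (IH Hs') => IH1 IH2.
have Ssub : [set x in s] \subset [set x in j :: s].
  by apply/subsetP => x; rewrite !inE => ->; rewrite orbT.
split=> [i J HJ|i]; rewrite /kapf /= -/(kapf s v) AopE.
  have HJ' : ~~ (J \subset [set x in s]).
    by apply: contra HJ => HJ; apply: subset_trans Ssub.
  rewrite big1 ?subr0 => [|l _]; last by rewrite IH1 // mulr0.
  case: ifP => jJ; last by rewrite mulr0.
  rewrite IH1 ?mulr0 //; apply: contra HJ => H.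
  apply/subsetP => x xJ; rewrite inE in_cons; case: eqP => //= xj.
  have : x \in J :\ j by rewrite in_setD1 xJ andbT; apply/eqP.
  by move/(subsetP H); rewrite inE.
rewrite big1 ?subr0 => [|l _]; last first.
  rewrite IH1 ?mulr0 //; apply/negP => /subsetP /(_ j).
  by rewrite !inE eqxx (negbTE jns) => /(_ isT).
rewrite inE in_cons eqxx /=.
have -> : [set x in j :: s] :\ j = [set x in s].
  apply/setP => x; rewrite in_setD1 !inE; case: eqP => //= ->.
  by rewrite (negbTE jns).
have -> : sgn [set x in j :: s] j = 1.
  rewrite /sgn; have -> : [set l in [set x in j :: s] | (l < j)%N] = set0.
    apply/setP => x; rewrite !inE; case: eqP => [->|_]; first by rewrite ltnn.
    case xs: (x \in s) => //=; move/allP: Hall => /(_ x xs); rewrite /ltord.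
    by move=> jx; rewrite ltnNge ltnW.
  by rewrite cards0 expr0.
by rewrite mul1r IH2 mulSn exprD mulrA.
Qed.

Lemma eps_kap v : epsX p (kap v) = v.
Proof.
have Hs : sorted ltord (enum 'I_n).
  by have := iota_ltn_sorted 0 n; rewrite -val_enum_ord sorted_map.
case: (kapf_top v Hs) => _ H2.
apply/matrixP=> i c; rewrite (ord1 c) mxE /kap.
have -> : [set: 'I_n] = [set x in enum 'I_n] by apply/setP => x; rewrite !inE mem_enum.
by rewrite H2 size_enum_ord mulrA sign_sq mul1r.
Qed.

Definition tpar (b : bool) (z : XK) := forall i (J : {set 'I_n}), p i (+) odd #|J| != b -> z i J = 0.

Lemma tpar_add b a c : tpar b a -> tpar b c -> tpar b (a + c).
Proof. by move=> Ha Hc i J HJ; rewrite ffD ffD Ha ?Hc ?addr0. Qed.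
Lemma tpar_N b a : tpar b a -> tpar b (- a).
Proof. by move=> Ha i J HJ; rewrite ffN ffN Ha ?oppr0. Qed.
Lemma tpar_0 b : tpar b 0.
Proof. by move=> i J _; rewrite !ff0. Qed.
Lemma tpar_sum b (I : finType) (F : I -> XK) : (forall i, tpar b (F i)) -> tpar b (\sum_i F i).
Proof. by move=> H; elim/big_rec: _ => [|i x _ Hx]; [apply: tpar_0 | apply: tpar_add]. Qed.
Lemma tpar_Z b c a : tpar b a -> tpar b (c *: a).
Proof. by move=> Ha i J HJ; rewrite !ffunE Ha // /GRing.scale /= mulr0. Qed.

Lemma tpar_mxop b M z : odd_mx p M -> tpar b z -> tpar (~~ b) (mxop M z).
Proof.
move=> Mo Hz i J HJ; rewrite ffunE sum_ffunE big1 // => l _; rewrite ffunE.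
case E: (p i == p l); first by rewrite Mo ?(eqP E) // scale0r.
rewrite Hz ?scaler0 //.
by move: E HJ; clear Hz; case: (p i); case: (p l); case: b; case: (odd _).
Qed.
Lemma tpar_d1 b z : tpar b z -> tpar (~~ b) (d1 z).
Proof. exact: tpar_mxop. Qed.

Lemma tpar_Hx b z : tpar b z -> tpar (~~ b) (Hx z).
Proof.
move=> Hz i J HJ; rewrite !ffunE.
have -> : h (z i) J = 0.
  apply: (h_supp (Q := fun l => odd l == p i (+) b)).
    move=> K HK; apply: Hz; move: HK; move: (p i) (b) (odd #|K|).
    by case; case; case.
  move=> l Hl; apply/eqP => E; move: HJ Hl; rewrite E /=.
  by move: (p i) (b) (odd l); case; case; case.
by rewrite /GRing.scale /= mulr0.
Qed.
Lemma tpar_T b z : tpar b z -> tpar b (T z).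
Proof. by move=> H; rewrite -[b]negbK; apply: tpar_Hx; apply: tpar_d1. Qed.
Lemma tpar_iter b m z : tpar b z -> tpar b (iter m T z).
Proof. by elim: m => [|m IH] //= H; apply: tpar_T; apply: IH. Qed.

Lemma tpar_Pz b a : vhomog p b a -> tpar b (sigX sigma0 a).
Proof.
move=> Ha i J HJ; rewrite ffunE; case E: (#|J| == 0%N).
  rewrite Ha ?sig0 ?ffunE //; move: HJ; rewrite (eqP E) /=.
  by move: (p i) (b); case; case.
by apply: sig_hom; rewrite E.
Qed.

Lemma tpar_emb b v : vhomog (pshift n p) b v -> tpar (b (+) odd n) (emb v).
Proof.
move=> Hv i J HJ; rewrite !ffunE; case: eqP => // E.
rewrite Hv //; move: HJ; rewrite E cards0 /= /pshift.
by move: (p i) (b) (odd n); case; case; case.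
Qed.

Lemma tpar_Aop b j z : tpar b z -> tpar (~~ b) (Aop j z).
Proof.
move=> Hz; apply: tpar_add; last by apply: tpar_N; apply: tpar_mxop.
move=> i J HJ; rewrite !ffunE; case: ifP => jJ; last by rewrite /GRing.scale /= mulr0.
rewrite Hz ?mulr0 /GRing.scale /= ?mulr0 //.
move: HJ; rewrite (cardsD1 j J) jJ /= add0n.
by move: (p i) (b) (odd #|J :\ j|); case; case; case.
Qed.

Lemma tpar_kapf b s v : vhomog (pshift n p) b v -> tpar (b (+) odd n (+) odd (size s)) (kapf s v).
Proof.
move=> Hv; elim: s => [|j s IH] /=; first by rewrite addbF; apply: tpar_emb.
rewrite /kapf /= -/(kapf s v).
have -> : b (+) odd n (+) ~~ odd (size s) = ~~ (b (+) odd n (+) odd (size s)).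
  by move: (b) (odd n) (odd _); case; case; case.
exact: tpar_Aop.
Qed.
Lemma tpar_kap b v : vhomog (pshift n p) b v -> tpar b (kap v).
Proof.
move=> Hv; have := @tpar_kapf b (enum 'I_n) v Hv; rewrite size_enum_ord.
by rewrite -addbA addbb addbF.
Qed.

Lemma eps_tpar b z : tpar b z -> vhomog (pshift n p) b (epsX p z).
Proof.
move=> Hz i Hi; rewrite mxE Hz ?mulr0 //.
by rewrite cardsT card_ord.
Qed.

Lemma slin_lin (V U : lmodType R) (f : V -> U) :
  (forall c a b, f (c *: a + b) = c *: f a + f b) -> Slinear phi f.
Proof. by move=> H s a b; apply: H. Qed.
Lemma slin_comp (V U Y : lmodType R) (f : V -> U) (g : U -> Y) :
  Slinear phi f -> Slinear phi g -> Slinear phi (fun a => g (f a)).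
Proof. by move=> Hf Hg s a b; rewrite Hf Hg. Qed.
Lemma slin_sum (V U : lmodType R) (I : finType) (F : I -> V -> U) :
  (forall i, Slinear phi (F i)) -> Slinear phi (fun a => \sum_i F i a).
Proof.
move=> H s a b; rewrite scaler_sumr -big_split /=; apply: eq_bigr => i _; exact: H.
Qed.
Lemma slin_sigX : Slinear phi (sigX sigma0 : 'cV[R]_k -> XK).
Proof.
move=> s a b; apply/ffunP=> i; rewrite !ffunE !mxE.
by case: sdr => [Hs _]; rewrite Hs.
Qed.
Lemma slin_Hx : Slinear phi Hx.
Proof. by move=> s a b; rewrite Hx_add HxZ. Qed.
Lemma slin_d1 : Slinear phi d1.
Proof. by apply: slin_lin => c a b; rewrite d1_add d1Z. Qed.
Lemma slin_T : Slinear phi T.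
Proof. exact: slin_comp slin_d1 slin_Hx. Qed.
Lemma slin_iterT m : Slinear phi (iter m T).
Proof.
elim: m => [|m IH] //= s a b; rewrite !iterS (IH s a b); exact: slin_T.
Qed.
Lemma slin_eps : Slinear phi (epsX p : XK -> 'cV[R]_k).
Proof. by apply: slin_lin => c a b; rewrite eps_add epsZ. Qed.
Lemma slin_kap : Slinear phi kap.
Proof. by apply: slin_lin => c a b; rewrite /kap kapf_add kapfZ. Qed.
Lemma slin_hinf N : Slinear phi (hinf N).
Proof. by apply: slin_sum => m; apply: slin_comp slin_Hx (slin_iterT m). Qed.

Lemma slin_psi : Slinear phi (psi p D h sigma0).
Proof.
rewrite /psi /sig_inf -/T; apply: slin_comp slin_eps.
by apply: slin_sum => m; apply: slin_comp slin_sigX (slin_iterT m).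
Qed.

Lemma lamprod_lin c a b : lamprod lam (c *: a + b) = c *: lamprod lam a + lamprod lam b.
Proof.
rewrite /lamprod; elim: (enum 'I_n) => [|j s IH] //=.
by rewrite IH mulmxDr scalemxAr.
Qed.
Lemma slin_theta : Slinear phi (theta lam).
Proof.
apply: slin_lin => c a b; rewrite /theta lamprod_lin scalerDr !scalerA mulrC //.
Qed.

Lemma psi_eqmod a b : eqmodt t a b -> psi p D h sigma0 a = psi p D h sigma0 b.
Proof. by move=> H; rewrite /psi /sig_inf (sigX_eq H). Qed.

Lemma psi_par b a : vhomog p b a -> vhomog (pshift n p) b (psi p D h sigma0 a).
Proof.
move=> Ha; rewrite /psi /sig_inf -/T; apply: eps_tpar; apply: tpar_sum => m.
by apply: tpar_iter; apply: tpar_Pz.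
Qed.

Lemma psi_top a : psi p D h sigma0 a = epsX p (iter n T (sigX sigma0 a)).
Proof.
rewrite /psi /sig_inf -/T big_ord_recr /= eps_add (addf_sum _ eps_add) big1 ?add0r // => m _.
apply: (eps_hom (m := m)); last exact: hom_iter.
by rewrite neq_ltn ltn_ord.
Qed.

Lemma vhomog_mx q b (M : 'M[R]_k) v : (forall i j, q i = q j -> M i j = 0) ->
  vhomog q b v -> vhomog q (~~ b) (M *m v).
Proof.
move=> Mo Hv i Hi; rewrite mxE big1 // => j _.
case E: (q i == q j); first by rewrite Mo ?(eqP E) // mul0r.
rewrite Hv ?mulr0 //; move: E Hi; move: (q i) (q j) (b); by case; case; case.
Qed.

Lemma theta_par b v : vhomog (pshift n p) b v -> vhomog p b (theta lam v).
Proof.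
move=> Hv; rewrite /theta /lamprod.
have Hv' : vhomog p (b (+) odd n) v.
  move=> i Hi; apply: Hv; move: Hi; rewrite /pshift; move: (p i) (b) (odd n); by case; case; case.
have : vhomog p (b (+) odd n (+) odd (size (enum 'I_n))) (foldr (fun j w => lam j *m w) v (enum 'I_n)).
  elim: (enum 'I_n) => [|j s IH] /=; first by rewrite addbF.
  have -> : b (+) odd n (+) ~~ odd (size s) = ~~ (b (+) odd n (+) odd (size s)).
    by move: (b) (odd n) (odd (size s)); case; case; case.
  by apply: vhomog_mx => //; apply: lamodd.
rewrite size_enum_ord -addbA addbb addbF => H i Hi.
by rewrite mxE H ?mulr0.
Qed.

Definition Ivec (v : 'cV[R]_k) := forall i, inI (v i 0).
Lemma Ivec_add a b : Ivec a -> Ivec b -> Ivec (a + b).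
Proof. by move=> Ha Hb i; rewrite mxE; apply: inID. Qed.

Lemma foldD s v : Ivec (foldr (fun j w => lam j *m w) (D *m v) s -
   (-1) ^+ size s *: (D *m foldr (fun j w => lam j *m w) v s)).
Proof.
elim: s => [|j s IH] /=.
  by move=> i; rewrite expr0 scale1r !mxE subrr; apply: inI0.
set w := foldr _ v s; set r := foldr _ (D *m v) s - _ in IH.
have -> : foldr (fun j w => lam j *m w) (D *m v) s = r + (-1) ^+ size s *: (D *m w).
  by rewrite /r subrK.
have EL : lam j *m D = (t j)%:M - D *m lam j by rewrite -lamD addrK.
have -> : lam j *m (r + (-1) ^+ size s *: (D *m w)) - (-1) ^+ (size s).+1 *: (D *m (lam j *m w))
   = lam j *m r + ((-1) ^+ size s * t j) *: w.
  rewrite mulmxDr -scalemxAr (mulmxA (lam j) D w) EL mulmxBl mul_scalar_mx -mulmxA exprS.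
  apply/matrixP => i c; rewrite !mxE; ring.
apply: Ivec_add; first exact: Ivec_mul.
by move=> i; rewrite mxE -mulrA; apply: inIM; apply: inIt.
Qed.

Lemma theta_D v : eqmodt t (theta lam (((-1) ^+ n *: D) *m v)) (D *m theta lam v).
Proof.
have H := foldD (enum 'I_n) v; rewrite size_enum_ord in H.
move=> i; have := H i; rewrite /theta /lamprod -scalemxAl.
have -> : foldr (fun j w => lam j *m w) ((-1) ^+ n *: (D *m v)) (enum 'I_n) =
   (-1) ^+ n *: foldr (fun j w => lam j *m w) (D *m v) (enum 'I_n).
  by elim: (enum 'I_n) => [|j s IH] //=; rewrite IH scalemxAr.
rewrite scalerA sign_sq scale1r -scalemxAr !mxE //.
Qed.

Definition Hfin (v : 'cV[R]_k) : 'cV[R]_k := epsX p (hinf n (kap v)).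

Lemma slin_Hfin : Slinear phi Hfin.
Proof. exact: slin_comp (slin_comp slin_kap (slin_hinf n)) slin_eps. Qed.

Lemma Hfin_par b v : vhomog (pshift n p) b v -> vhomog (pshift n p) (~~ b) (Hfin v).
Proof.
move=> Hv; apply: eps_tpar; apply: tpar_sum => m; apply: tpar_iter; apply: tpar_Hx.
exact: tpar_kap.
Qed.

Lemma eps_Dt w : epsX p (Dt w) = ((-1) ^+ n *: D) *m epsX p w.
Proof. by rewrite /Dt eps_add eps_Dl addr0 eps_d1 scalemxAl. Qed.

Lemma Dt_kap v : Dt (kap v) = kap (((-1) ^+ n *: D) *m v).
Proof. by rewrite /kap Dt_kapf size_enum_ord -kapfZ scalemxAl. Qed.

Lemma psi_theta v : psi p D h sigma0 (theta lam v) - v =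
  ((-1) ^+ n *: D) *m Hfin v + Hfin (((-1) ^+ n *: D) *m v).
Proof.
have E1 : psi p D h sigma0 (theta lam v) = epsX p (sN n (kap v)).
  by rewrite /psi /sig_inf -/T -pvec_kap.
have := congr1 (epsX p) (pert n (kap v)).
rewrite !eps_add eps_d1.
rewrite (eps_degge (z := iter n T (Hx (kap v)))); last first.
  by have := degge_iterT (j := n) (degge_Hx (degge0 (kap v))); rewrite addn1.
rewrite (eps_degge (z := iter n.+1 T (kap v))); last first.
  by have := degge_iterT (j := n.+1) (degge0 (kap v)); rewrite addn0.
rewrite mulmx0 scaler0 !addr0 eps_kap eps_Dl addr0 eps_d1 scalemxAl Dt_kap -E1 => ->.
rewrite /Hfin; set X := (_ *m _); set Y := epsX p (hinf n _). by rewrite -[v + X + Y]addrA [_ - v]addrC addKr.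
Qed.

Lemma theta_lin c a b : theta lam (c *: a + b) = c *: theta lam a + theta lam b.
Proof. by rewrite /theta lamprod_lin scalerDr !scalerA mulrC. Qed.
Lemma thetaD a b : theta lam (a + b) = theta lam a + theta lam b.
Proof. by rewrite -[a]scale1r theta_lin !scale1r. Qed.
Lemma thetaB a b : theta lam (a - b) = theta lam a - theta lam b.
Proof. by rewrite addrC -scaleN1r theta_lin scaleN1r addrC. Qed.

Lemma eqmodt_refl (a : 'cV[R]_k) : eqmodt t a a.
Proof. by move=> i; rewrite subrr; apply: inI0. Qed.
Lemma eqmodt_addr (a b c : 'cV[R]_k) : eqmodt t a b -> eqmodt t (a + c) (b + c).
Proof. by move=> H i; rewrite !mxE opprD addrACA subrr addr0; apply: H. Qed.

Lemma main : let psi := psi p D h sigma0 in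
  let theta := theta lam in
  let e := e_idem p D h sigma0 lam in
  let dn := (-1) ^+ n *: D in (* differential of X[n] *)
  (* psi : X/tX -> X[n] is a morphism in hf(S,W) *)
  [/\ (forall a b, eqmodt t a b -> psi a = psi b)
      /\ Slinear phi psi
      /\ (forall b a, vhomog p b a -> vhomog (pshift n p) b (psi a))
      /\ (forall a, psi (D *m a) = dn *m psi a),
    (* theta : X[n] -> X/tX is a morphism in hf(S,W) *)
      Slinear phi theta
      /\ (forall b v, vhomog (pshift n p) b v -> vhomog p b (theta v))
      /\ (forall v, eqmodt t (theta (dn *m v)) (D *m theta v)),
    (* psi o theta = 1 in hf(S,W) *)
      exists H : 'cV[R]_k -> 'cV[R]_k,
        [/\ Slinear phi H,
            (forall b v, vhomog (pshift n p) b v -> vhomog (pshift n p) (~~ b) (H v)) &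
            (forall v, psi (theta v) - v = dn *m H v + H (dn *m v))],
    (* e = theta o psi is idempotent in hf(S,W) *)
      exists H : 'cV[R]_k -> 'cV[R]_k,
        [/\ (forall a b, eqmodt t a b -> eqmodt t (H a) (H b)),
            (forall s a b, eqmodt t (H (phi s *: a + b)) (phi s *: H a + H b)),
            (forall b a, vhomog p b a ->
               exists y, vhomog p (~~ b) y /\ eqmodt t (H a) y) &
            (forall a, eqmodt t (e (e a) - e a) (D *m H a + H (D *m a)))] &
      forall a, eqmodt t (e a)
        ((-1) ^+ n *: lamprod lam (epsX p (iter n (fun z => hX p h (dX1 D z)) (sigX sigma0 a))))].
Proof.
move=> psi0 theta0 e dn; rewrite /psi0 /theta0 /e /dn; split.
- split; first exact: psi_eqmod.
  split; first exact: slin_psi.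
  split; first exact: psi_par.
  exact: psiD.
- split; first exact: slin_theta.
  split; first exact: theta_par.
  exact: theta_D.
- exists Hfin; split; [exact: slin_Hfin | exact: Hfin_par | exact: psi_theta].
- exists (fun a => theta lam (Hfin (psi p D h sigma0 a))); split.
  + by move=> a b /psi_eqmod ->; apply: eqmodt_refl.
  + move=> s a b; rewrite (slin_comp (slin_comp slin_psi slin_Hfin) slin_theta).
    exact: eqmodt_refl.
  + move=> b a Ha; exists (theta lam (Hfin (psi p D h sigma0 a))); split; last exact: eqmodt_refl.
    by apply: theta_par; apply: Hfin_par; apply: psi_par.
  + move=> a; rewrite /e_idem -thetaB psi_theta thetaD -psiD.
    exact: eqmodt_addr (theta_D _).
- by move=> a; rewrite /e_idem psi_top; apply: eqmodt_refl.
Qed.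

End Pf.

Unset Implicit Arguments.
Set Strict Implicit.

Theorem theorem7p4
  (S R : comPzRingType) (phi : {rmorphism S -> R}) (W : S)
  (k : nat) (p : 'I_k -> bool) (D : 'M[R]_k)
  (n : nat) (t : 'I_n -> R) (lam : 'I_n -> 'M[R]_k)
  (sigma0 : R -> {ffun {set 'I_n} -> R^o})
  (h : {ffun {set 'I_n} -> R^o} -> {ffun {set 'I_n} -> R^o}) :
  (* (X, d) is a finite rank matrix factorisation of W over R *)
  odd_mx p D -> D *m D = (phi W)%:M ->
  (* t is quasi-regular, with odd lambda_j, lambda_j d + d lambda_j = t_j *)
  quasi_regular t ->
  (forall j, odd_mx p (lam j)) ->
  (forall j, lam j *m D + D *m lam j = (t j)%:M) ->
  (* the homotopy data sigma, h *)
  SDR_data phi t sigma0 h ->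
  let psi := psi p D h sigma0 in
  let theta := theta lam in
  let e := e_idem p D h sigma0 lam in
  let dn := (-1) ^+ n *: D in (* differential of X[n] *)
  (* psi : X/tX -> X[n] is a morphism in hf(S,W) *)
  [/\ (forall a b, eqmodt t a b -> psi a = psi b)
      /\ Slinear phi psi
      /\ (forall b a, vhomog p b a -> vhomog (pshift n p) b (psi a))
      /\ (forall a, psi (D *m a) = dn *m psi a),
    (* theta : X[n] -> X/tX is a morphism in hf(S,W) *)
      Slinear phi theta
      /\ (forall b v, vhomog (pshift n p) b v -> vhomog p b (theta v))
      /\ (forall v, eqmodt t (theta (dn *m v)) (D *m theta v)),
    (* psi o theta = 1 in hf(S,W) *)
      exists H : 'cV[R]_k -> 'cV[R]_k,
        [/\ Slinear phi H,
            (forall b v, vhomog (pshift n p) b v -> vhomog (pshift n p) (~~ b) (H v)) &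
            (forall v, psi (theta v) - v = dn *m H v + H (dn *m v))],
    (* e = theta o psi is idempotent in hf(S,W) *)
      exists H : 'cV[R]_k -> 'cV[R]_k,
        [/\ (forall a b, eqmodt t a b -> eqmodt t (H a) (H b)),
            (forall s a b, eqmodt t (H (phi s *: a + b)) (phi s *: H a + H b)),
            (forall b a, vhomog p b a ->
               exists y, vhomog p (~~ b) y /\ eqmodt t (H a) y) &
            (forall a, eqmodt t (e (e a) - e a) (D *m H a + H (D *m a)))] &
    (* e = (-1)^n lambda_1 ... lambda_n epsilon (hd)^n sigma *)
      forall a, eqmodt t (e a)
        ((-1) ^+ n *: lamprod lam (epsX p (iter n (fun z => hX p h (dX1 D z)) (sigX sigma0 a))))].
Proof.
move=> H1 H2 H3 H4 H5 H6; exact: (main H1 H2 H4 H5 H6).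
Qed.
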